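(* Let $G\sim G(n,m)$ and fix $\delta\in(0,1)$; assume $1\le m\le(1-\delta)N$. Let $\mu=2m/n$ and let $\lambda=\lambda_n$ be real with $\lambda_n\to0$. Then, as $n\to\infty$, $$\sup_{k}\left|\frac{\mathbb E[e^{\lambda(d_1-\mu)}\mid d_2=k]}{\mathbb E[e^{\lambda(d_1-\mu)}]}-1\right|\to0,$$ where the supremum is over all $k\in\{0,1,\dots,n-1\}$ with $\mathbb P(d_2=k)>0$.
   Context: $N=\binom n2$; $G(n,m)$ is the uniform distribution over graphs on $[n]$ with exactly $m$ edges, $m=m(n)$. $d_i$ denotes the degree of vertex $i$. *)

(* Defs.v *)
From HB Require Import structures.
From mathcomp Require Import all_boot all_order all_algebra.
From mathcomp Require Import all_classical all_reals all_analysis.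
Set Implicit Arguments. Unset Strict Implicit. Unset Printing Implicit Defensive.
Import Order.TTheory GRing.Theory Num.Theory.
Local Open Scope ring_scope.

(* A simple graph on vertex set [n] = 'I_n is a set of 2-element subsets. *)
Definition pot_edges (n : nat) : {set {set 'I_n}} := [set e : {set 'I_n} | #|e| == 2%N].

Definition NN (n : nat) : nat := 'C(n, 2).

(* Support of G(n,m): all graphs on [n] with exactly m edges (uniform). *)
Definition Gnm (n m : nat) : {set {set {set 'I_n}}} :=
  [set G : {set {set 'I_n}} | (G \subset pot_edges n) && (#|G| == m)].

(* degree of the vertex with (0-based) label i; vertex "1" of the paper is
   label 0, vertex "2" is label 1. *)
Definition deg (n : nat) (G : {set {set 'I_n}}) (i : nat) : nat :=
  #|[set e in G | [exists x in e, nat_of_ord x == i]]|.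

Section Exps.
Variable R : realType.

Definition mu (n m : nat) : R := (2 * m)%:R / n%:R.

Definition Eexp (n m : nat) (lam : R) : R :=
  (\sum_(G in Gnm n m) expR (lam * ((deg G 0)%:R - mu n m))) / (#|Gnm n m|)%:R.

(* number of graphs in G(n,m) with d_2 = k;  P(d_2 = k) > 0 iff this is > 0 *)
Definition cnt2 (n m k : nat) : nat := #|[set G in Gnm n m | deg G 1 == k]|.

Definition Econd (n m : nat) (lam : R) (k : nat) : R :=
  (\sum_(G in Gnm n m | deg G 1 == k) expR (lam * ((deg G 0)%:R - mu n m)))
    / (cnt2 n m k)%:R.

(* sup over k in {0,...,n-1} with P(d_2 = k) > 0 (a finite max; values >= 0) *)
Definition supdev (n m : nat) (lam : R) : R :=
  \big[Num.max/0]_(k < n | (0 < cnt2 n m k)%N) `| Econd n m lam k / Eexp n m lam - 1 |.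
End Exps.

(* Main.v *)
Require Import Defs.
From HB Require Import structures.
From mathcomp Require Import all_boot all_order all_algebra.
From mathcomp Require Import all_classical all_reals all_analysis.
From mathcomp Require Import ring lra zify.
Import Order.TTheory GRing.Theory Num.Theory.
Import numFieldNormedType.Exports.

Module Helpers.
Local Open Scope ring_scope.
Set Implicit Arguments. Unset Strict Implicit.

Section DC.
Variables (T : finType) (R : numDomainType).
Definition draws (U : {set T}) j := [set B : {set T} | (B \subset U) && (#|B| == j)].

Lemma dc (U : {set T}) (F : {set T} -> R) j :
  \sum_(B in draws U j) \sum_(f in U :\: B) F (f |: B)
  = \sum_(B in draws U j.+1) F B *+ j.+1.
Proof.
have L : forall B, \sum_(f in U :\: B) F (f |: B) = \sum_(f in U | f \notin B) F (f |: B).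
  by move=> B; apply: eq_bigl => f; rewrite !inE andbC.
under eq_bigr do rewrite L.
rewrite (exchange_big_dep (mem U)) /=; last by move=> ? ? ? /andP[].
have L2 : forall B, B \in draws U j.+1 -> F B *+ j.+1 = \sum_(f in U | f \in B) F B.
  move=> B; rewrite inE => /andP[sBU /eqP cB].
  rewrite sumr_const -cB; congr (_ *+ _); apply: eq_card => x.
  rewrite [in RHS]unfold_in /=; apply/idP/idP => [xB|/andP[]//].
  by rewrite (fintype.subsetP sBU).
rewrite (eq_bigr _ L2) (exchange_big_dep (mem U)) /=; last by move=> ? ? ? /andP[].
apply: eq_bigr => f fU.
rewrite [RHS](reindex_onto (fun B => f |: B) (fun B => B :\ f)) /=; last first.
  by move=> B /and3P[_ _ fB]; rewrite finset.setD1K.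
apply: eq_bigl => B; rewrite !inE fU eqxx /=.
case fB: (f \in B) => /=.
- have -> : ((f |: B) :\ f == B) = false.
    by apply/negbTE/eqP => E; move: fB; rewrite -E !inE eqxx.
  by rewrite !andbF.
- by rewrite setU1K ?fB // eqxx !andbT cardsU1 fB add1n eqSS finset.subUset finset.sub1set fU.
Qed.
End DC.

Section Phi.
Variables (R : realType) (T : finType) (U : {set T}) (p : pred T) (r : R).
Definition cp (A : {set T}) : nat := #|[set e in A | p e]|.
Lemma cpE A : cp A = (\sum_(e in A) (p e : nat))%N.
Proof.
rewrite /cp -sum1_card big_mkcond /= [RHS]big_mkcond /=.
by apply: eq_bigr => e _; rewrite !inE; case: (e \in A); case: (p e).
Qed.
Lemma cpU1 (f : T) (A : {set T}) : f \notin A -> cp (f |: A) = (p f + cp A)%N.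
Proof. by move=> fA; rewrite !cpE big_setU1. Qed.

Definition hh A := r ^+ cp A.
Definition ss j := \sum_(B in draws U j) hh B.
Definition cc j := #|draws U j|.

Lemma ss_step j : ss j.+1 *+ j.+1 =
  \sum_(B in draws U j) hh B * ((#|U| - j)%:R + (r - 1) * (cp (U :\: B))%:R).
Proof.
rewrite /ss -sumrMnl -dc; apply: eq_bigr => B; rewrite inE => /andP[sBU /eqP cB].
transitivity (\sum_(f in U :\: B) hh B * (1 + (r-1) * (p f : nat)%:R)).
  apply: eq_bigr => f; rewrite inE => /andP[fB _]; rewrite /hh cpU1 // exprD.
  by case: (p f) => /=; rewrite ?expr1 ?expr0; ring.
rewrite -mulr_sumr big_split /= sumr_const -mulr_sumr -natr_sum -cpE.
by rewrite cardsD (finset.setIidPr sBU) cB.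
Qed.

Lemma cc_step j : (cc j.+1)%:R *+ j.+1 = (#|U| - j)%:R * (cc j)%:R :> R.
Proof.
have := dc U (fun _ => 1 : R) j.
rewrite !sumr_const /cc => H.
rewrite (_ : (#|draws U j.+1|)%:R *+ j.+1 = j.+1%:R *+ #|draws U j.+1| :> R); last by rewrite -!mulrnA mulnC.
rewrite -H.
rewrite -[#|draws U j|]sum1_card natr_sum mulr_sumr; apply: eq_bigr => B.
rewrite inE => /andP[sBU /eqP cB]; rewrite sumr_const cardsD (finset.setIidPr sBU) cB.
by rewrite mulr1 -mulr_natl mulr1.
Qed.

Hypothesis r0 : 0 < r.
Lemma hh_ge0 A : 0 <= hh A. Proof. by rewrite /hh exprn_ge0 // ltW. Qed.
Lemma ss_ge0 j : 0 <= ss j. Proof. by apply: sumr_ge0 => B _; apply: hh_ge0. Qed.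

Lemma step_bound j : `| ss j.+1 *+ j.+1 - (#|U| - j)%:R * ss j |
   <= `|r - 1| * (cp U)%:R * ss j.
Proof.
rewrite ss_step /ss mulr_sumr -sumrB mulr_sumr.
apply: (le_trans (ler_norm_sum _ _ _)); apply: ler_sum => B _.
have -> : hh B * ((#|U| - j)%:R + (r - 1) * (cp (U :\: B))%:R) - (#|U| - j)%:R * hh B
   = (r - 1) * (cp (U :\: B))%:R * hh B by ring.
rewrite !normrM (ger0_norm (hh_ge0 _)) normr_nat ler_wpM2r ?hh_ge0 //.
rewrite ler_wpM2l // ler_nat /cp; apply: subset_leq_card.
by apply/fintype.subsetP => e; rewrite !inE => /andP[/andP[_ ->] ->].
Qed.

Definition Phi j := ss j / (cc j)%:R.

Lemma cc_succ_pos j : (0 < cc j)%N -> (j < #|U|)%N -> (0 < cc j.+1)%N.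
Proof.
move=> c0 jU; have := cc_step j; rewrite lt0n; apply: contraPN => /eqP ->.
rewrite mul0rn => /esym/eqP; rewrite mulf_eq0 !pnatr_eq0 subn_eq0 leqNgt jU /=.
by move: c0; rewrite lt0n => /negPf ->.
Qed.

Lemma expR_fact (y : R) : 0 <= y -> y <= 1/2 -> 1 + y <= expR (2 * y) /\ 1 <= (1 - y) * expR (2 * y).
Proof.
move=> y0 y1; have e := expR_ge1Dx (2 * y); split; first by lra.
have h1 : (1 - y) * (1 + 2 * y) <= (1 - y) * expR (2 * y) by rewrite ler_wpM2l //; lra.
have h2 : 0 <= y * (1 - 2 * y) by rewrite mulr_ge0 //; lra.
lra.
Qed.

Lemma Phi_step (y : R) m j : 0 <= y -> y <= 1/2 -> (m <= #|U|)%N ->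
  `|r - 1| * (cp U)%:R <= y * (#|U| - m)%:R -> (j < m)%N -> (0 < cc j)%N ->
  Phi j.+1 <= expR (2 * y) * Phi j /\ Phi j <= expR (2 * y) * Phi j.+1.
Proof.
move=> y0 y1 mU hy jm c0.
have jU : (j < #|U|)%N by apply: leq_trans mU.
have K0 : 0 < (#|U| - j)%:R :> R by rewrite ltr0n subn_gt0.
have C0 : 0 < (cc j)%:R :> R by rewrite ltr0n.
have hK : `|r - 1| * (cp U)%:R <= y * (#|U| - j)%:R.
  apply: (le_trans hy); apply: ler_wpM2l => //; rewrite ler_nat.
  by apply: leq_sub2l; apply: ltnW.
have sb := step_bound j.
have s0 := ss_ge0 j.
set X := ss j.+1 *+ j.+1 in sb.
set K := (#|U| - j)%:R in K0 hK sb.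
have E : Phi j.+1 = X / (K * (cc j)%:R).
  rewrite /Phi -cc_step /X -[ss _ *+ _]mulr_natr -[_%:R *+ j.+1]mulr_natr -mulf_div divff ?mulr1 //.
have hb : `|X - K * ss j| <= y * K * ss j.
  apply: (le_trans sb); rewrite ler_wpM2r //.
have [e1 e2] := expR_fact y0 y1.
move: hb; rewrite ler_norml => /andP[hl hr].
have KC : 0 < K * (cc j)%:R by rewrite mulr_gt0.
have Ks : 0 <= K * ss j by rewrite mulr_ge0 // ltW.
set e := expR (2 * y) in e1 e2 *.
have eg : 0 <= e by rewrite /e expR_ge0.
rewrite E /Phi; split.
  rewrite -(ler_pM2r KC).
  have -> : X / (K * (cc j)%:R) * (K * (cc j)%:R) = X by field; rewrite !gt_eqF.
  have -> : e * (ss j / (cc j)%:R) * (K * (cc j)%:R) = e * (K * ss j).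
    by field; rewrite gt_eqF.
  have h1 : (1 + y) * (K * ss j) <= e * (K * ss j) by rewrite ler_wpM2r.
  lra.
rewrite -(ler_pM2r KC).
have -> : ss j / (cc j)%:R * (K * (cc j)%:R) = K * ss j by field; rewrite gt_eqF.
have -> : e * (X / (K * (cc j)%:R)) * (K * (cc j)%:R) = e * X by field; rewrite !gt_eqF.
have h1 : e * ((1 - y) * (K * ss j)) <= e * X by rewrite ler_wpM2l //; lra.
have h2 : 1 * (K * ss j) <= ((1 - y) * e) * (K * ss j) by rewrite ler_wpM2r.
lra.
Qed.

Lemma Phi_chain (y : R) m t : 0 <= y -> y <= 1/2 -> (m <= #|U|)%N ->
  `|r - 1| * (cp U)%:R <= y * (#|U| - m)%:R -> forall j, (j + t = m)%N -> (0 < cc j)%N ->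
  Phi j <= expR (2 * y * t%:R) * Phi m /\ Phi m <= expR (2 * y * t%:R) * Phi j.
Proof.
move=> y0 y1 mU hy; elim: t => [|t IH] j jt c0.
  by rewrite addn0 in jt; rewrite jt mulr0 expR0 !mul1r.
have jm : (j < m)%N by rewrite -jt -addSnnS leq_addr.
have c1 := cc_succ_pos c0 (leq_trans jm mU).
have jt' : (j.+1 + t = m)%N by rewrite addSnnS.
have [i1 i2] := IH j.+1 jt' c1.
have [s1 s2] := Phi_step y0 y1 mU hy jm c0.
have eg : 0 <= expR (2 * y) by apply: expR_ge0.
have Eg : 0 <= expR (2 * y * t%:R) by apply: expR_ge0.
have -> : expR (2 * y * t.+1%:R) = expR (2 * y) * expR (2 * y * t%:R).
  by rewrite -expRD; congr expR; rewrite -addn1 natrD; ring.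
split.
  apply: (le_trans s2); rewrite -mulrA ler_wpM2l //.
have h := ler_wpM2l Eg s1.
have -> : expR (2 * y) * expR (2 * y * t%:R) * Phi j = expR (2 * y * t%:R) * (expR (2 * y) * Phi j) by ring.
exact: (le_trans i2 h).
Qed.
End Phi.

Section Decomp.
Variables (R : realType) (T : finType) (X Y : {set T}).
Hypothesis dXY : [disjoint X & Y].

Lemma capUl (A B : {set T}) : A \subset X -> B \subset Y -> (A :|: B) :&: X = A.
Proof.
move=> sAX sBY; apply/setP => x; rewrite !inE.
case xA: (x \in A) => /=; first by rewrite (fintype.subsetP sAX).
case xB: (x \in B) => //=; apply/negP => xX.
have xY := fintype.subsetP sBY _ xB.
by move: dXY; rewrite -setI_eq0 => /eqP/setP/(_ x); rewrite !inE xX xY.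
Qed.

Lemma capUr (A B : {set T}) : A \subset X -> B \subset Y -> (A :|: B) :&: Y = B.
Proof.
move=> sAX sBY; apply/setP => x; rewrite !inE.
case xB: (x \in B) => /=; first by rewrite (fintype.subsetP sBY) // orbT.
rewrite orbF; case xA: (x \in A) => //=; apply/negP => xY.
have xX := fintype.subsetP sAX _ xA.
by move: dXY; rewrite -setI_eq0 => /eqP/setP/(_ x); rewrite !inE xX xY.
Qed.

Lemma decomp (F : {set T} -> R) (k j : nat) :
  \sum_(G : {set T} | (G \subset X :|: Y) && (#|G :&: X| == k) && (#|G :&: Y| == j)) F G
  = \sum_(A in draws X k) \sum_(B in draws Y j) F (A :|: B).
Proof.
rewrite pair_big /=.
set P := [pred p : {set T} * {set T} | (p.1 \in draws X k) && (p.2 \in draws Y j)].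
have inj : {in P &, injective (fun p : {set T} * {set T} => p.1 :|: p.2)}.
  move=> [A B] [A' B']; rewrite !inE /= => /andP[/andP[sA _] /andP[sB _]].
  move=> /andP[/andP[sA' _] /andP[sB' _]] E.
  by rewrite -(capUl sA sB) E (capUl sA' sB') -(capUr sA sB) E (capUr sA' sB').
rewrite (eq_bigl (fun p => p \in P)); last by [].
rewrite -(big_imset _ inj) /=; apply: eq_bigl => G.
apply/idP/imsetP.
  move=> /andP[/andP[sG /eqP cX] /eqP cY].
  exists (G :&: X, G :&: Y).
    by rewrite !inE finset.subsetIr finset.subsetIr cX cY !eqxx.
  by rewrite /= -finset.setIUr; apply/esym/finset.setIidPl.
move=> [[A B]]; rewrite !inE /= => /andP[/andP[sA /eqP cA] /andP[sB /eqP cB]] ->.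
rewrite (capUl sA sB) (capUr sA sB) cA cB !eqxx !andbT.
by rewrite finset.setUSS.
Qed.
End Decomp.

Section Graph.
Variable n : nat.
Definition qv (i : nat) (e : {set 'I_n}) : bool := [exists x in e, nat_of_ord x == i].
Definition S2 := [set e in pot_edges n | qv 1 e].
Definition E2 := [set e in pot_edges n | ~~ qv 1 e].

Lemma dS2E2 : [disjoint S2 & E2].
Proof.
rewrite -setI_eq0; apply/eqP/setP => e; rewrite !inE.
by case: (qv 1 e); rewrite ?andbF ?andbT ?andbN.
Qed.

Lemma potU : pot_edges n = S2 :|: E2.
Proof. by apply/setP => e; rewrite !inE; case: (qv 1 e); rewrite ?andbT ?andbF ?orbF. Qed.

Lemma card_pot : #|pot_edges n| = 'C(n, 2).
Proof. by rewrite /pot_edges card_draws card_ord. Qed.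

Lemma card_potSE : #|pot_edges n| = (#|S2| + #|E2|)%N.
Proof.
rewrite potU cardsU; have := dS2E2; rewrite -setI_eq0 => /eqP ->.
by rewrite cards0 subn0.
Qed.

Lemma deg_cp G i : deg G i = cp (qv i) G.
Proof. by []. Qed.

Lemma qv_val (e : {set 'I_n}) i x y : x \in e -> nat_of_ord x = i ->
  qv i e -> y \in e -> nat_of_ord y = i -> x = y.
Proof. by move=> _ xi _ _ yi; apply: val_inj; rewrite /= xi yi. Qed.

Lemma star_le (i : nat) : (#|[set e in pot_edges n | qv i e]| <= n)%N.
Proof.
case: (set_0Vmem [set e in pot_edges n | qv i e]) => [->|[e0]]; first by rewrite cards0.
rewrite !inE => /andP[_ /existsP[xi /andP[_ /eqP xiv]]].
have sub : [set e in pot_edges n | qv i e] \subset [set [set v; xi] | v in 'I_n]; last first.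
  apply: (leq_trans (subset_leq_card sub)).
  by rewrite (leq_trans (leq_imset_card _ _)) // card_ord.
apply/fintype.subsetP => e; rewrite !inE => /andP[/cards2P[a [b [ab ->]]]].
move=> /existsP[z /andP[zab /eqP zv]].
have E : z = xi by apply: val_inj; rewrite /= zv xiv.
move: zab; rewrite E !inE => /orP[] /eqP ->; apply/imsetP.
  by exists b => //; rewrite finset.setUC.
by exists a.
Qed.

Lemma S2_le : (#|S2| <= n)%N. Proof. exact: star_le. Qed.

Lemma cpE2_le : (cp (qv 0) E2 <= n)%N.
Proof.
apply: leq_trans (star_le 0); apply: subset_leq_card.
by apply/fintype.subsetP => e; rewrite !inE => /andP[/andP[-> _] ->].
Qed.

Lemma cpS2_le1 (A : {set {set 'I_n}}) : A \subset S2 -> (cp (qv 0) A <= 1)%N.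
Proof.
move=> sA; apply/card_le1_eqP => e e'; rewrite !inE => /andP[eA q0] /andP[e'A q0'].
have := fintype.subsetP sA _ eA; have := fintype.subsetP sA _ e'A.
rewrite !inE => /andP[c' q1'] /andP[c q1].
move: q0 q1 q0' q1' => /existsP[x0 /andP[x0e /eqP x0v]] /existsP[x1 /andP[x1e /eqP x1v]].
move=> /existsP[y0 /andP[y0e /eqP y0v]] /existsP[y1 /andP[y1e /eqP y1v]].
have E0 : y0 = x0 by apply: val_inj; rewrite /= x0v y0v.
have E1 : y1 = x1 by apply: val_inj; rewrite /= x1v y1v.
rewrite E0 in y0e; rewrite E1 in y1e.
have x01 : x0 != x1 by apply/eqP => E; move: x0v; rewrite E x1v.
have H : forall f : {set 'I_n}, #|f| == 2%N -> x0 \in f -> x1 \in f -> f = [set x0; x1].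
  move=> f /eqP cf a b; apply/esym/eqP; rewrite eqEcard cf cards2 x01 leqnn andbT.
  by rewrite finset.subUset !finset.sub1set a b.
by rewrite (H _ c x0e x1e) (H _ c' y0e y1e).
Qed.
End Graph.

Section Sums.
Variables (R : realType) (n m : nat) (lam : R).

Lemma deg1_S2 (G : {set {set 'I_n}}) : G \subset pot_edges n -> deg G 1 = #|G :&: S2 n|.
Proof.
move=> sG; rewrite /deg; apply: eq_card => e; rewrite !inE.
by case eG: (e \in G) => //=; have := fintype.subsetP sG _ eG; rewrite inE => ->.
Qed.

Lemma cardG (G : {set {set 'I_n}}) : G \subset pot_edges n ->
  #|G| = (#|G :&: S2 n| + #|G :&: E2 n|)%N.
Proof.
move=> sG.
have E : G = (G :&: S2 n) :|: (G :&: E2 n).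
  by rewrite -finset.setIUr -potU; apply/esym/finset.setIidPl.
rewrite {1}E cardsU.
have -> : G :&: S2 n :&: (G :&: E2 n) = finset.set0.
  apply/eqP; rewrite setI_eq0; apply: (disjointWl (finset.subsetIr _ _)).
  by rewrite disjoint_sym; apply: (disjointWl (finset.subsetIr _ _)); rewrite disjoint_sym dS2E2.
by rewrite cards0 subn0.
Qed.

Lemma cond_eq (G : {set {set 'I_n}}) k : (k <= m)%N ->
  (G \in Gnm n m) && (deg G 1 == k) =
  (G \subset S2 n :|: E2 n) && (#|G :&: S2 n| == k) && (#|G :&: E2 n| == m - k)%N.
Proof.
move=> km; rewrite inE -potU.
case sG: (G \subset pot_edges n) => //=.
rewrite deg1_S2 // (cardG sG).
apply/idP/idP => [/andP[/eqP h1 /eqP h2]|/andP[/eqP h1 /eqP h2]].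
  by rewrite h2 eqxx -h1 h2 addKn eqxx.
by rewrite h1 h2 subnKC // !eqxx.
Qed.

Lemma sumk (F : {set {set 'I_n}} -> R) k : (k <= m)%N ->
  \sum_(G in Gnm n m | deg G 1 == k) F G =
  \sum_(A in draws (S2 n) k) \sum_(B in draws (E2 n) (m - k)%N) F (A :|: B).
Proof.
move=> km; rewrite -decomp; last exact: dS2E2.
by apply: eq_bigl => G; rewrite cond_eq.
Qed.

Lemma cpU (A B : {set {set 'I_n}}) : A \subset S2 n -> B \subset E2 n ->
  cp (qv 0) (A :|: B) = (cp (qv 0) A + cp (qv 0) B)%N.
Proof.
move=> sA sB; rewrite !cpE -bigU /=.
  by apply: eq_bigl => e; rewrite !inE.
apply: (disjointWl sA); rewrite disjoint_sym; apply: (disjointWl sB).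
by rewrite disjoint_sym dS2E2.
Qed.

Definition ww (G : {set {set 'I_n}}) := expR (lam * ((deg G 0)%:R - mu R n m)).

Lemma Sk_eq k : (k <= m)%N ->
  \sum_(G in Gnm n m | deg G 1 == k) ww G =
  expR (- (lam * mu R n m)) * ss (S2 n) (qv 0) (expR lam) k * ss (E2 n) (qv 0) (expR lam) (m - k)%N.
Proof.
move=> km; rewrite sumk // /ss -mulrA mulr_suml mulr_sumr; apply: eq_bigr => A.
rewrite inE => /andP[sA _]; rewrite mulrA mulr_sumr; apply: eq_bigr => B.
rewrite inE => /andP[sB _].
rewrite /ww deg_cp cpU // /hh.
have -> : lam * ((cp (qv 0) A + cp (qv 0) B)%N%:R - mu R n m) =
  - (lam * mu R n m) + lam * (cp (qv 0) A)%:R + lam * (cp (qv 0) B)%:R.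
  by rewrite natrD; ring.
by rewrite !expRD !expRM_natr mulrA.
Qed.

Lemma cnt_eq k : (k <= m)%N ->
  (cnt2 n m k)%:R = (cc (S2 n) k)%:R * (cc (E2 n) (m - k)%N)%:R :> R.
Proof.
move=> km.
have -> : (cnt2 n m k)%:R = \sum_(G in Gnm n m | deg G 1 == k) (1 : R).
  rewrite /cnt2 -sum1_card natr_sum; apply: eq_bigl => G; by rewrite inE.
rewrite sumk // /cc -sum1_card natr_sum mulr_suml; apply: eq_bigr => A _.
by rewrite sumr_const mul1r.
Qed.

Lemma ssS2_bound k :
  expR (- `|lam|) * (cc (S2 n) k)%:R <= ss (S2 n) (qv 0) (expR lam) k <=
  expR `|lam| * (cc (S2 n) k)%:R.
Proof.
rewrite /ss /cc -sum1_card natr_sum !mulr_sumr; apply/andP; split; apply: ler_sum => A;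
  rewrite inE => /andP[sA _]; rewrite mulr1 /hh;
  have := cpS2_le1 sA; case: (cp (qv 0) A) => [|[|//]] _; rewrite ?expr0 ?expr1.
- by rewrite expR_le1 oppr_le0.
- by rewrite ler_expR; have := ler_norm (- lam); rewrite normrN; lra.
- by rewrite -expR0 ler_expR normr_ge0.
- by rewrite ler_expR ler_norm.
Qed.
End Sums.

Lemma ss_gt0 (R : realType) (T : finType) (U : {set T}) p (r : R) j :
  0 < r -> (0 < cc U j)%N -> 0 < ss U p r j.
Proof.
move=> r0 /card_gt0P[B0 B0in]; rewrite /ss (bigD1 B0) //=.
apply: ltr_wpDr; first by apply: sumr_ge0 => B _; apply: hh_ge0.
by rewrite /hh exprn_gt0.
Qed.

Lemma ss_cc0 (R : realType) (T : finType) (U : {set T}) p (r : R) j :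
  cc U j = 0%N -> ss U p r j = 0.
Proof. by move=> /card0_eq c0; rewrite /ss big_pred0 // => B; rewrite c0. Qed.

Lemma Phi_ge0 (R : realType) (T : finType) (U : {set T}) p (r : R) j :
  0 < r -> 0 <= Phi U p r j.
Proof. by move=> r0; rewrite /Phi divr_ge0 ?ss_ge0. Qed.

Lemma deg_le n (G : {set {set 'I_n}}) i : (deg G i <= #|G|)%N.
Proof.
apply: subset_leq_card; apply/fintype.subsetP => e; rewrite inE; by case/andP.
Qed.

Lemma ratio_bound (R : realType) (L U x z : R) : 0 < L -> L <= x <= U -> L <= z <= U ->
  `|x / z - 1| <= U / L - 1.
Proof.
move=> L0 /andP[Lx xU] /andP[Lz zU].
have z0 : 0 < z by apply: lt_le_trans Lz.
have U0 : 0 < U by apply: lt_le_trans zU.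
have h1 : x / z <= U / L.
  rewrite ler_pdivrMr // mulrAC ler_pdivlMr //.
  apply: (le_trans (ler_wpM2r (ltW L0) xU)); apply: ler_wpM2l; lra.
have h2 : L / U <= x / z.
  rewrite ler_pdivrMr // mulrAC ler_pdivlMr //.
  apply: (le_trans (ler_wpM2l (ltW L0) zU)); apply: ler_wpM2r; lra.
have h3 : 1 - L / U <= U / L - 1.
  have s1 : 1 <= U / L by rewrite ler_pdivlMr // mul1r; lra.
  have -> : L / U = (U / L)^-1 by rewrite invf_div.
  set s := U / L in s1 *.
  have s0 : 0 < s by lra.
  rewrite -subr_ge0.
  have -> : s - 1 - (1 - s^-1) = (s - 1) ^+ 2 / s by field; rewrite gt_eqF.
  by rewrite divr_ge0 ?sqr_ge0 // ltW.
rewrite ler_norml; apply/andP; split; lra.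
Qed.

Lemma partk (R : realType) n m (F : {set {set 'I_n}} -> R) :
  \sum_(G in Gnm n m) F G = \sum_(k < m.+1) \sum_(G in Gnm n m | deg G 1 == k) F G.
Proof.
rewrite (partition_big (fun G => (inord (deg G 1) : 'I_m.+1)) predT) //=.
apply: eq_bigr => k _; apply: eq_bigl => G.
case GG: (G \in Gnm n m) => //=.
have dm : (deg G 1 < m.+1)%N.
  by move: GG; rewrite inE => /andP[_ /eqP <-]; rewrite ltnS deg_le.
by rewrite -(inj_eq val_inj) /= inordK.
Qed.

Section Key.
Variables (R : realType) (n m : nat) (lam y : R).
Hypotheses (hmE : (m <= #|E2 n|)%N) (y0 : 0 <= y) (y1 : y <= 1/2)
  (hy : `|expR lam - 1| * n%:R <= y * (#|E2 n| - m)%:R).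

Let r0 : 0 < expR lam := expR_gt0 lam.
Let Ph := Phi (E2 n) (qv 0) (expR lam).
Let C0 := expR (- (lam * mu R n m)).
Let bb := 2 * y * n%:R.

Lemma hy' : `|expR lam - 1| * (cp (qv 0) (E2 n))%:R <= y * (#|E2 n| - m)%:R.
Proof. apply: le_trans hy; apply: ler_wpM2l => //; rewrite ler_nat; exact: cpE2_le. Qed.

Lemma cnt_nat k : (k <= m)%N -> cnt2 n m k = (cc (S2 n) k * cc (E2 n) (m - k)%N)%N.
Proof. by move=> km; apply/eqP; rewrite -(eqr_nat R) natrM cnt_eq. Qed.

Lemma supp_info k : (k <= m)%N -> (0 < cnt2 n m k)%N ->
  [/\ (0 < cc (S2 n) k)%N, (0 < cc (E2 n) (m - k)%N)%N & (k <= n)%N].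
Proof.
move=> km; rewrite cnt_nat // muln_gt0 => /andP[cS cE]; split => //.
move: cS => /card_gt0P[A]; rewrite inE => /andP[sA /eqP <-].
by apply: leq_trans (S2_le n); apply: subset_leq_card.
Qed.

Lemma chain_k k : (k <= m)%N -> (0 < cnt2 n m k)%N ->
  Ph (m - k)%N <= expR bb * Ph m /\ Ph m <= expR bb * Ph (m - k)%N.
Proof.
move=> km cp0; have [cS cE kn] := supp_info km cp0.
have [c1 c2] := Phi_chain r0 y0 y1 hmE hy' (subnK km) cE.
have eb : expR (2 * y * k%:R) <= expR bb.
  by rewrite ler_expR /bb ler_wpM2l ?mulr_ge0 // ler_nat.
have P1 := Phi_ge0 (E2 n) (qv 0) (m - k)%N r0.
have P2 := Phi_ge0 (E2 n) (qv 0) m r0.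
split.
  by apply: (le_trans c1); apply: ler_wpM2r.
by apply: (le_trans c2); apply: ler_wpM2r.
Qed.

Lemma Phm_pos k : (k <= m)%N -> (0 < cnt2 n m k)%N -> 0 < Ph m.
Proof.
move=> km cp0; have [cS cE kn] := supp_info km cp0.
have [c1 _] := chain_k km cp0.
have p1 : 0 < Ph (m - k)%N.
  by rewrite /Ph /Phi divr_gt0 ?ss_gt0 // ltr0n.
have e0 : 0 < expR bb := expR_gt0 _.
case: (ltrP 0 (Ph m)) => // h.
have : expR bb * Ph m <= 0 by apply: mulr_ge0_le0 => //; apply: ltW.
lra.
Qed.

Let L := C0 * Ph m * expR (- (`|lam| + bb)).
Let U := C0 * Ph m * expR (`|lam| + bb).

Lemma Sk_bound k : (k <= m)%N ->
  L * (cnt2 n m k)%:R <= \sum_(G in Gnm n m | deg G 1 == k) ww m lam G <= U * (cnt2 n m k)%:R.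
Proof.
move=> km; rewrite Sk_eq // cnt_eq //.
case: (posnP (cnt2 n m k)) => [c0|cp0].
  move: c0; rewrite cnt_nat // => /eqP; rewrite muln_eq0 => /orP[] /eqP c0.
    by rewrite ss_cc0 // c0 !(mulr0, mul0r) lexx.
  by rewrite (ss_cc0 _ _ c0) c0 !(mulr0, mul0r) lexx.
have [cS cE kn] := supp_info km cp0.
have [h1 h2] := chain_k km cp0.
have /andP[g1 g2] := ssS2_bound n lam k.
have E1 : ss (E2 n) (qv 0) (expR lam) (m - k)%N = Ph (m - k)%N * (cc (E2 n) (m - k)%N)%:R.
  by rewrite /Ph /Phi divfK // pnatr_eq0 -lt0n.
rewrite E1.
have C00 : 0 <= C0 by apply: expR_ge0.
have ccE0 : 0 <= (cc (E2 n) (m - k)%N)%:R :> R by [].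
have ccS0 : 0 <= (cc (S2 n) k)%:R :> R by [].
have P1 := Phi_ge0 (E2 n) (qv 0) (m - k)%N r0.
have P2 := Phi_ge0 (E2 n) (qv 0) m r0.
have S0 : 0 <= ss (S2 n) (qv 0) (expR lam) k by apply: ss_ge0.
have eb0 : 0 <= expR bb := expR_ge0 _.
have el0 : 0 <= expR (- `|lam|) := expR_ge0 _.
apply/andP; split.
  have h3 : expR (- bb) * Ph m <= Ph (m - k)%N.
    have := ler_wpM2l (expR_ge0 (- bb)) h2.
    by rewrite [expR (- bb) * (expR bb * _)]mulrA -expRD addNr expR0 mul1r.
  have := ler_pM (mulr_ge0 el0 ccS0) (mulr_ge0 (expR_ge0 _) P2) g1 h3 => h4.
  have := ler_wpM2l (mulr_ge0 C00 ccE0) h4.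
  have -> : L * ((cc (S2 n) k)%:R * (cc (E2 n) (m - k)%N)%:R) =
    C0 * (cc (E2 n) (m - k)%N)%:R * (expR (- `|lam|) * (cc (S2 n) k)%:R * (expR (- bb) * Ph m)).
    by rewrite /L opprD expRD; ring.
  move=> h5; apply: (le_trans h5); rewrite le_eqVlt; apply/orP; left; apply/eqP; rewrite /C0 /Ph; ring.
have := ler_pM S0 P1 g2 h1 => h4.
have := ler_wpM2l (mulr_ge0 C00 ccE0) h4.
have -> : U * ((cc (S2 n) k)%:R * (cc (E2 n) (m - k)%N)%:R) =
  C0 * (cc (E2 n) (m - k)%N)%:R * (expR `|lam| * (cc (S2 n) k)%:R * (expR bb * Ph m)).
  by rewrite /U expRD; ring.
move=> h5; apply: (le_trans _ h5); rewrite le_eqVlt; apply/orP; left; apply/eqP; rewrite /C0 /Ph; ring.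
Qed.
End Key.

Lemma cnt_sum n m : #|Gnm n m| = (\sum_(k < m.+1) cnt2 n m k)%N.
Proof.
rewrite -sum1_card.
rewrite (partition_big (fun G => (inord (deg G 1) : 'I_m.+1)) predT) //=.
apply: eq_bigr => k _; rewrite /cnt2 -sum1_card; apply: eq_bigl => G.
rewrite inE; case GG: (G \in Gnm n m) => //=.
have dm : (deg G 1 < m.+1)%N.
  by move: GG; rewrite inE => /andP[_ /eqP <-]; rewrite ltnS deg_le.
by rewrite -(inj_eq val_inj) /= inordK.
Qed.

Lemma supp_le n m k : (0 < cnt2 n m k)%N -> (k <= m)%N.
Proof.
move=> /card_gt0P[G]; rewrite !inE => /andP[/andP[_ /eqP cG] /eqP <-].
by rewrite -cG deg_le.
Qed.

Lemma key (R : realType) n m (lam y : R) : (m <= #|E2 n|)%N -> 0 <= y -> y <= 1/2 ->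
  `|expR lam - 1| * n%:R <= y * (#|E2 n| - m)%:R ->
  supdev n m lam <= expR (2 * (`|lam| + 2 * y * n%:R)) - 1.
Proof.
move=> hmE y0 y1 hy.
set a := `|lam| + 2 * y * n%:R.
have a0 : 0 <= a by rewrite /a addr_ge0 // !mulr_ge0.
have B0 : 0 <= expR (2 * a) - 1.
  by rewrite subr_ge0 -expR0 ler_expR mulr_ge0.
rewrite /supdev; apply: (big_ind (fun v => v <= expR (2 * a) - 1)) => //.
  by move=> x z hx hz; rewrite ge_max hx hz.
move=> k cp0; have km := supp_le cp0.
have Pm := Phm_pos hmE y0 y1 hy km cp0.
set Ph := Phi (E2 n) (qv 0) (expR lam) m in Pm.
set C0 := expR (- (lam * mu R n m)).
have C00 : 0 < C0 by apply: expR_gt0.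
have L0 : 0 < C0 * Ph * expR (- a) by apply: mulr_gt0; [apply: mulr_gt0 | apply: expR_gt0].
have hS := fun j => Sk_bound hmE y0 y1 hy (k := j).
have cpR : 0 < (cnt2 n m k)%:R :> R by rewrite ltr0n.
have hE : C0 * Ph * expR (- a) <= Econd n m lam k <= C0 * Ph * expR a.
  have /andP[s1 s2] := hS k km.
  rewrite /Econd; apply/andP; split.
    by rewrite ler_pdivlMr.
  by rewrite ler_pdivrMr.
have GR : 0 < (#|Gnm n m|)%:R :> R.
  rewrite ltr0n; apply: leq_trans cp0 _; apply: subset_leq_card.
  by apply/fintype.subsetP => G; rewrite inE => /andP[].
have hX : C0 * Ph * expR (- a) <= Eexp n m lam <= C0 * Ph * expR a.
  rewrite /Eexp partk cnt_sum natr_sum.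
  apply/andP; split.
    rewrite ler_pdivlMr; last by rewrite -natr_sum -cnt_sum.
    rewrite mulr_sumr; apply: ler_sum => j _.
    by have /andP[] := hS j (ltn_ord j).
  rewrite ler_pdivrMr; last by rewrite -natr_sum -cnt_sum.
  rewrite mulr_sumr; apply: ler_sum => j _.
  by have /andP[] := hS j (ltn_ord j).
have := ratio_bound L0 hE hX.
have -> : C0 * Ph * expR a / (C0 * Ph * expR (- a)) = expR (2 * a).
  have -> : expR (2 * a) = expR a * expR a by rewrite -expRD; congr expR; ring.
  rewrite expRN; field.
  by rewrite (gt_eqF C00) (gt_eqF Pm) (gt_eqF (expR_gt0 a)).
by [].
Qed.

Lemma expR_sub1 (R : realType) (x : R) : `|x| <= 1/2 -> `|expR x - 1| <= 2 * `|x|.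
Proof.
move=> hx; have e1 := expR_ge1Dx x; have e2 := expR_ge1Dx (- x).
have ex := expR_gt0 x.
case: (lerP 0 x) => x0.
  rewrite ger0_norm ?ger0_norm // in hx *; last by lra.
  have h : expR (- x) * expR x = 1 by rewrite -expRD addNr expR0.
  have h2 : (1 - x) * expR x <= 1.
    rewrite -h; apply: ler_wpM2r; lra.
  (* expR x - 1 <= 2x  <=  (1-x) e <= 1 and x <= 1/2 *)
  have h3 : 0 <= x * (expR x - 1) by apply: mulr_ge0; lra.
  nra.
rewrite ltr0_norm // in hx *; rewrite ler0_norm; last first.
  rewrite subr_le0 -expR0 ler_expR; lra.
lra.
Qed.

Lemma bin2R (R : realType) n : (1 <= n)%N -> 2 * ('C(n, 2))%:R = n%:R * (n%:R - 1) :> R.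
Proof.
move=> n1; have E : (n * n.-1 = 2 * 'C(n, 2))%N by rewrite -(mul_bin_diag n 1) bin1.
by rewrite -natrM -E natrM -subn1 natrB.
Qed.

Lemma point_bound (R : realType) (d : R) n m (lam : R) : 0 < d -> d < 1 -> (2 <= n)%N ->
  8 <= d * n%:R -> m%:R <= (1 - d) * ('C(n, 2))%:R ->
  `|lam| * (4 * (1 + 32 / d)) <= 1 ->
  supdev n m lam <= expR (2 * ((1 + 32 / d) * `|lam|)) - 1.
Proof.
move=> d0 d1 n2 h8 hm hl.
set l := `|lam| in hl *.
have l0 : 0 <= l by apply: normr_ge0.
have nR : 2 <= n%:R :> R by rewrite (ler_nat R 2).
set C := ('C(n, 2))%:R : R in hm.
have hC : 2 * C = n%:R * (n%:R - 1) by rewrite /C bin2R // ltnW.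
have hE : C - n%:R <= (#|E2 n|)%:R.
  have := card_potSE n; rewrite card_pot => /(congr1 (fun k => k%:R : R)).
  rewrite natrD /C => ->; have := S2_le n; rewrite -(ler_nat R) => h; lra.
have hC4 : n%:R * n%:R / 4 <= C.
  have : n%:R * n%:R <= 2 * (n%:R * (n%:R - 1)) :> R.
    have : n%:R * 2 <= n%:R * n%:R :> R by apply: ler_wpM2l; lra.
    lra.
  lra.
have hD : d * (n%:R * n%:R) / 8 <= (#|E2 n|)%:R - m%:R.
  have a1 : d * (n%:R * n%:R / 4) <= d * C by apply: ler_wpM2l; lra.
  have a2 : n%:R * 8 <= n%:R * (d * n%:R) by apply: ler_wpM2l; lra.
  lra.
have nn0 : 0 < d * (n%:R * n%:R) / 8 by rewrite !mulr_gt0 //; lra.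
have mE : (m <= #|E2 n|)%N by rewrite -(ler_nat R); lra.
set u := d^-1.
have du : d * u = 1 by rewrite /u divff // gt_eqF.
have l128 : 128 * l <= d.
  have h : 128 * (l * u) <= 1 by move: hl; rewrite /u; lra.
  have := ler_wpM2l (ltW d0) h.
  have -> : d * (128 * (l * u)) = 128 * l by rewrite /u; field; rewrite gt_eqF.
  by rewrite mulr1.
set y := 16 * l / (d * n%:R).
have dn0 : 0 < d * n%:R by lra.
have y0 : 0 <= y by rewrite /y divr_ge0 ?mulr_ge0 // ltW.
have y1 : y <= 1/2.
  have : d * 2 <= d * n%:R by apply: ler_wpM2l; lra.
  rewrite /y ler_pdivrMr //; lra.
have hy : `|expR lam - 1| * n%:R <= y * (#|E2 n| - m)%:R.
  rewrite natrB //.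
  have e1 : `|expR lam - 1| <= 2 * l by apply: expR_sub1; rewrite -/l; lra.
  apply: (le_trans (ler_wpM2r (ler0n _ _) e1)).
  apply: (le_trans _ (ler_wpM2l y0 hD)).
  rewrite le_eqVlt; apply/orP; left; apply/eqP; rewrite /y; field.
  by rewrite !gt_eqF //; lra.
have := key mE y0 y1 hy.
have -> : `|lam| + 2 * y * n%:R = (1 + 32 / d) * `|lam|.
  by rewrite /y /l; field; rewrite !gt_eqF //; lra.
by [].
Qed.

End Helpers.
Import Helpers.
Unset Implicit Arguments. Set Strict Implicit.

Local Open Scope classical_set_scope.
Local Open Scope ring_scope.

Lemma supdev_ge0 (R : realType) n m (lam : R) : 0 <= supdev n m lam.
Proof.
rewrite /supdev; apply: (big_ind (fun v => 0 <= v)) => //.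
  by move=> x z hx hz; rewrite le_max hx.
Qed.

Theorem mainTheorem16 (R : realType) (delta : R) (m : nat -> nat) (lam : nat -> R) :
  0 < delta < 1 ->
  (\forall n \near \oo, (1 <= m n)%N /\ (m n)%:R <= (1 - delta) * (NN n)%:R) ->
  lam @ \oo --> 0 ->
  (fun n => supdev n (m n) (lam n)) @ \oo --> 0.
Proof.
move=> /andP[d0 d1] hm hlam.
set c := 1 + 32 / delta.
have c0 : 0 < c.
  have : 0 < 32 / delta by rewrite divr_gt0.
  rewrite /c; lra.
have c4 : 0 < 4 * c by rewrite mulr_gt0.
apply/cvgrPdist_le => e e0.
set eta := Num.min (1 / (4 * c)) (e / (4 * c)).
have eta0 : 0 < eta by rewrite lt_min !divr_gt0.
have /cvgrPdist_le/(_ eta eta0) hl := hlam.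
near=> n.
have [hm1 hm2] : (1 <= m n)%N /\ (m n)%:R <= (1 - delta) * (NN n)%:R.
  by near: n; exact: hm.
have hln : `|0 - lam n| <= eta by near: n; exact: hl.
have h8 : 8 / delta <= n%:R by near: n; exact: nbhs_infty_ger.
have n2 : (2 <= n)%N by near: n; exact: nbhs_infty_ge.
rewrite sub0r normrN ger0_norm ?supdev_ge0 //.
rewrite sub0r normrN in hln.
have [hl1 hl2] : `|lam n| <= 1 / (4 * c) /\ `|lam n| <= e / (4 * c).
  by move: hln; rewrite /eta le_min => /andP[].
have hl3 : `|lam n| * (4 * c) <= 1 by rewrite -ler_pdivlMr.
have hl4 : `|lam n| * (4 * c) <= e by rewrite -ler_pdivlMr.
have h8' : 8 <= delta * n%:R by rewrite mulrC -ler_pdivrMr.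
have := point_bound d0 d1 n2 h8' hm2 hl3.
rewrite -/c => hs.
apply: (le_trans hs).
have l0 : 0 <= `|lam n| := normr_ge0 _.
have cl0 : 0 <= 2 * (c * `|lam n|) by rewrite !mulr_ge0 // ltW.
have hx : `|2 * (c * `|lam n|)| <= 1/2 by rewrite ger0_norm //; lra.
have := expR_sub1 hx; rewrite (ger0_norm cl0) => h.
have : expR (2 * (c * `|lam n|)) - 1 <= 2 * (2 * (c * `|lam n|)).
  by apply: le_trans h; apply: ler_norm.
lra.
Unshelve. all: by end_near.
Qed.
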